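(* Let $n\ge3$ and let $G\colon[-2,2]\to\mathbb{R}^n$ be defined as in the context. For $T=(T_0,\dots,T_{n-2})\in[1,\infty)^{n-1}$ let $$\mathcal{F}(T):=\Big\{\sum_{r=0}^{n-2}s_rG^{(r)}(t): t\in[-2,2],\ |s_r|\leq T_r\ (0\le r\le n-2)\Big\},$$ for $\sigma>0$ let $\mathcal{F}_\sigma(T)$ be the Euclidean $\sigma$-neighbourhood of $\mathcal{F}(T)$, and let $\mathcal{L}_\sigma(T):=\mathcal{F}_\sigma(T)\cap\mathbb{Z}^n$. Then for all $R\geq T_0,\dots,T_{n-2}\geq\sigma\geq1$, $$\#\mathcal{L}_\sigma(T)\leq C\,R\prod_{r=0}^{n-2}T_r,$$ where $C$ depends only on $\sigma$, $n$ and the curve.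
   Context: Let $\gamma(t)=(t,f(t))$ with $f\colon U\to\mathbb{R}^{n-1}$ smooth on an open set $U\supset[-2,2]$ and $\det[\gamma^{(1)}(t)\ \cdots\ \gamma^{(n)}(t)]\neq0$ for $t\in U$. Let $\mathbf{e}_1(t),\dots,\mathbf{e}_n(t)$ be the Frenet frame, i.e. the orthonormal system obtained by applying Gram–Schmidt to $\gamma^{(1)}(t),\dots,\gamma^{(n)}(t)$. Standing assumption of the paper: the $n$-th component $\mathbf{e}_{n,n}(t)$ of $\mathbf{e}_n(t)$ is nonzero for all $t\in U$. Define $G(t):=\mathbf{e}_n(t)/\mathbf{e}_{n,n}(t)$; $G^{(r)}$ denotes its $r$-th derivative ($G^{(0)}=G$). *)

(* Defs.v *)
From HB Require Import structures.
From mathcomp Require Import all_boot all_order all_algebra.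
From mathcomp Require Import all_classical all_reals all_analysis.
Set Implicit Arguments. Unset Strict Implicit. Unset Printing Implicit Defensive.
Import Order.TTheory GRing.Theory Num.Theory.
Local Open Scope ring_scope.

Section Defs.
Variable R : realType.

(* Vectors of R^n are represented as functions nat -> R; only the
   coordinates 0 .. n-1 are relevant (all sums below range over i < n). *)
Definition vdot (n : nat) (u v : nat -> R) : R := \sum_(i < n) u i * v i.
Definition vnorm (n : nat) (u : nat -> R) : R := Num.sqrt (vdot n u u).

Definition gs_step (n : nat) (es : seq (nat -> R)) (v : nat -> R) : nat -> R :=
  let w := fun i => v i - \sum_(e <- es) vdot n v e * e i in
  fun i => w i / vnorm n w.

Definition gram_schmidt (n : nat) (vs : seq (nat -> R)) : seq (nat -> R) :=
  foldl (fun es v => rcons es (gs_step n es v)) [::] vs.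

(* The curve gamma(t) = (t, f(t)); f i is the i-th component of f
   (i = 0 .. n-2), so gamma has coordinates gamma_0 = t, gamma_i = f_(i-1). *)
Definition gamma (f : nat -> R -> R) (i : nat) : R -> R :=
  if i == 0%N then id else f i.-1.

Definition gamma_der (f : nat -> R -> R) (r : nat) (t : R) : nat -> R :=
  fun i => derive1n r (gamma f i) t.

Definition wronski_mx (n : nat) (f : nat -> R -> R) (t : R) : 'M[R]_n :=
  \matrix_(i < n, j < n) gamma_der f j.+1 t i.

(* Frenet frame: e_1(t), ..., e_n(t), Gram--Schmidt of gamma^(1..n)(t);
   frenet n f k t is e_(k+1)(t). *)
Definition frenet (n : nat) (f : nat -> R -> R) (k : nat) (t : R) : nat -> R :=
  nth (fun _ => 0) (gram_schmidt n [seq gamma_der f j.+1 t | j <- iota 0 n]) k.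

Definition e_last (n : nat) (f : nat -> R -> R) (t : R) : nat -> R :=
  frenet n f n.-1 t.

Definition Gvec (n : nat) (f : nat -> R -> R) (t : R) : nat -> R :=
  fun i => e_last n f t i / e_last n f t n.-1.

Definition Gder (n : nat) (f : nat -> R -> R) (r : nat) (t : R) : nat -> R :=
  fun i => derive1n r (fun s => Gvec n f s i) t.

Definition in_F (n : nat) (f : nat -> R -> R) (T : nat -> R) (x : nat -> R) : Prop :=
  exists (t : R) (s : nat -> R),
    -2 <= t <= 2 /\ (forall r, (r < n.-1)%N -> `|s r| <= T r) /\
    forall i, (i < n)%N -> x i = \sum_(r < n.-1) s r * Gder n f r t i.

Definition in_F_sigma (n : nat) (f : nat -> R -> R) (T : nat -> R) (sigma : R)
  (x : nat -> R) : Prop :=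
  exists y, in_F n f T y /\ vnorm n (fun i => x i - y i) < sigma.

Definition int_pt (n : nat) (z : n.-tuple int) : nat -> R :=
  fun i => (nth 0%R (tval z) i)%:~R.

Definition in_L (n : nat) (f : nat -> R -> R) (T : nat -> R) (sigma : R)
  (z : n.-tuple int) : Prop := in_F_sigma n f T sigma (int_pt z).

End Defs.

(* Main.v *)
Require Import Defs.
From HB Require Import structures.
From mathcomp Require Import all_boot all_order all_algebra.
From mathcomp Require Import all_classical all_reals all_analysis.
From mathcomp Require Import ring lra zify.
From Stdlib Require Import Lia.
Import Order.TTheory GRing.Theory Num.Theory numFieldTopology.Exports numFieldNormedType.Exports.
Local Open Scope ring_scope.
Local Open Scope classical_set_scope.
Set Implicit Arguments. Unset Strict Implicit.
Set Implicit Arguments. Unset Strict Implicit.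
Section Smooth.
Variables (R : realType) (U : set R).
Hypothesis hU : open U.

Definition Sinf (g : R -> R) := forall k x, U x -> derivable (derive1n k g) x 1.

Lemma near_U (f g : R -> R) x : U x -> (forall y, U y -> f y = g y) ->
  \forall y \near x, f y = g y.
Proof.
move=> Ux fg; have : nbhs x U by apply: hU.
by apply: filterS => y /fg.
Qed.

Lemma derivable_U (f g : R -> R) x : U x -> (forall y, U y -> f y = g y) ->
  derivable f x 1 -> derivable g x 1.
Proof. by move=> Ux fg; apply: near_eq_derivable; apply: near_U. Qed.

Lemma derive1_U (f g : R -> R) x : U x -> (forall y, U y -> f y = g y) ->
  derive1 f x = derive1 g x.
Proof. by move=> Ux fg; rewrite !derive1E; apply: near_eq_derive; apply: near_U. Qed.

Arguments derivable_U {f g x}.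
Arguments derive1_U {f g x}.

Inductive gen : (R -> R) -> Prop :=
| gen_atom g : Sinf g -> gen g
| gen_inv g : Sinf g -> (forall x, U x -> g x != 0) -> gen (fun x => (g x)^-1)
| gen_add a b : gen a -> gen b -> gen (fun x => a x + b x)
| gen_mul a b : gen a -> gen b -> gen (fun x => a x * b x)
| gen_ext a b : gen a -> (forall x, U x -> a x = b x) -> gen b.

Lemma Sinf_cst c : Sinf (cst c).
Proof.
move=> k; elim: k c => [|k IH] c x Ux; first exact: derivable_cst.
rewrite derive1Sn (_ : derive1 (cst c) = cst 0); first exact: IH.
by apply/funext => y; rewrite derive1_cst.
Qed.

Lemma Sinf_derive g : Sinf g -> Sinf (derive1 g).
Proof. by move=> Sg k x Ux; rewrite -derive1Sn; apply: Sg. Qed.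

Lemma gen_good g : gen g -> (forall x, U x -> derivable g x 1) /\
  exists h, gen h /\ forall x, U x -> derive1 g x = h x.
Proof.
elim=> {g}.
- move=> g Sg; split; first by move=> x Ux; apply: (Sg 0%N).
  by exists (derive1 g); split => //; apply/gen_atom/Sinf_derive.
- move=> g Sg g0; split.
    by move=> x Ux; apply: derivableV; [apply: g0|apply: (Sg 0%N)].
  exists (fun x => (cst (-1) x * derive1 g x) * ((g x)^-1 * (g x)^-1)).
  split.
    apply: gen_mul; first by apply: gen_mul; apply: gen_atom;
      [apply: Sinf_cst| apply: Sinf_derive].
    by apply: gen_mul; apply: gen_inv.
  move=> x Ux; rewrite derive1E deriveV ?g0 //; last exact: (Sg 0%N).
  rewrite derive1E /cst -exprVn expr2 /GRing.scale /= mulN1r mulNr mulNr; congr (- _); exact: mulrC.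
- move=> a b _ [da [ha [gha eha]]] _ [db [hb [ghb ehb]]]; split.
    by move=> x Ux; apply: derivableD; [apply: da|apply: db].
  exists (fun x => ha x + hb x); split; first exact: gen_add.
  move=> x Ux; rewrite derive1E deriveD; [|exact: da|exact: db].
  have Ea := eha x Ux; have Eb := ehb x Ux; rewrite derive1E in Ea; rewrite derive1E in Eb.
  by rewrite Ea Eb.
- move=> a b ga [da [ha [gha eha]]] gb [db [hb [ghb ehb]]]; split.
    by move=> x Ux; apply: derivableM; [apply: da|apply: db].
  exists (fun x => a x * hb x + b x * ha x); split.
    by apply: gen_add; apply: gen_mul.
  move=> x Ux; rewrite derive1E.
  have := deriveM (da x Ux) (db x Ux); rewrite /= => ->.
  have Ea := eha x Ux; have Eb := ehb x Ux; rewrite derive1E in Ea; rewrite derive1E in Eb.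
  rewrite /GRing.scale /= Ea Eb; reflexivity.
- move=> a b ga [da [ha [gha eha]]] ab; split.
    by move=> x Ux; exact: (derivable_U Ux ab (da x Ux)).
  exists ha; split=> // x Ux; rewrite -(derive1_U Ux ab); exact: eha.
Qed.

Arguments gen_good {g}.

Lemma gen_Sinf g : gen g -> Sinf g.
Proof.
move=> gg.
suff H : forall k, exists h, gen h /\ forall x, U x -> derive1n k g x = h x.
  move=> k x Ux; have [h [gh eh]] := H k.
  have [dh _] := gen_good gh.
  apply: (derivable_U Ux _ (dh x Ux)) => y Uy.
  by rewrite eh.
elim=> [|k [h [gh eh]]]; first by exists g.
have [_ [h' [gh' eh']]] := gen_good gh.
exists h'; split => // x Ux; rewrite derive1nS (derive1_U Ux eh); exact: eh'.
Qed.

Lemma Sinf_ext a b : Sinf a -> (forall x, U x -> a x = b x) -> Sinf b.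
Proof. by move=> Sa ab; apply: gen_Sinf; exact: (gen_ext (gen_atom Sa) ab). Qed.

Lemma Sinf_add a b : Sinf a -> Sinf b -> Sinf (fun x => a x + b x).
Proof. by move=> Sa Sb; apply: gen_Sinf; apply: gen_add; apply: gen_atom. Qed.

Lemma Sinf_mul a b : Sinf a -> Sinf b -> Sinf (fun x => a x * b x).
Proof. by move=> Sa Sb; apply: gen_Sinf; apply: gen_mul; apply: gen_atom. Qed.

Lemma Sinf_inv a : Sinf a -> (forall x, U x -> a x != 0) -> Sinf (fun x => (a x)^-1).
Proof. by move=> Sa a0; apply: gen_Sinf; exact: gen_inv. Qed.

Lemma Sinf_opp a : Sinf a -> Sinf (fun x => - a x).
Proof.
move=> Sa; apply: (Sinf_ext (a := fun x => cst (-1) x * a x)).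
  exact: (Sinf_mul (Sinf_cst (c := -1)) Sa).
by move=> x _; rewrite /cst mulN1r.
Qed.

Lemma Sinf_sub a b : Sinf a -> Sinf b -> Sinf (fun x => a x - b x).
Proof. by move=> Sa Sb; exact: (Sinf_add Sa (Sinf_opp Sb)). Qed.

Lemma Sinf_sum (I : eqType) (s : seq I) (F : I -> R -> R) :
  (forall i, i \in s -> Sinf (F i)) -> Sinf (fun x => \sum_(i <- s) F i x).
Proof.
elim: s => [|i s IH] H.
  by apply: (Sinf_ext (Sinf_cst (c:=0))) => x _; rewrite big_nil.
apply: (Sinf_ext (a := fun x => F i x + \sum_(j <- s) F j x)).
  apply: Sinf_add; first by apply: H; rewrite mem_head.
  by apply: IH => j js; apply: H; rewrite in_cons js orbT.
by move=> x _; rewrite big_cons.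
Qed.

Lemma Sinf_id : Sinf id.
Proof.
case=> [|k] x Ux; first exact: derivable_id.
rewrite derive1Sn (_ : derive1 id = cst 1); first exact: Sinf_cst.
by apply/funext => y; rewrite derive1_id.
Qed.

Lemma Sinf_derive1n g k : Sinf g -> Sinf (derive1n k g).
Proof. by move=> Sg j x Ux; rewrite /derive1n -iterD; apply: Sg. Qed.

End Smooth.
Section GS.
Variables (R : realType) (n : nat).

Definition wstep (ws : seq (nat -> R)) (v : nat -> R) : nat -> R :=
  fun i => v i - \sum_(w <- ws) (vdot n v w / vdot n w w) * w i.
Definition wlist (vs : seq (nat -> R)) :=
  foldl (fun ws v => rcons ws (wstep ws v)) [::] vs.
Definition normz (w : nat -> R) : nat -> R := fun i => w i / vnorm n w.

Lemma vdot_ge0 (w : nat -> R) : 0 <= vdot n w w.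
Proof. by apply: sumr_ge0 => i _; rewrite -expr2 sqr_ge0. Qed.

Lemma gs_step_normz (ws : seq (nat -> R)) (v : nat -> R) : gs_step n (map normz ws) v = normz (wstep ws v).
Proof.
have E : (fun i => v i - \sum_(e <- map normz ws) vdot n v e * e i) = wstep ws v.
  apply/funext => i; rewrite /wstep big_map; congr (_ - _); apply: eq_bigr => w _.
  have -> : vdot n v (normz w) = vdot n v w / vnorm n w.
    by rewrite /vdot mulr_suml; apply: eq_bigr => j _; rewrite /normz mulrA.
  rewrite /normz -[X in _ = _ / X * _](sqr_sqrtr (vdot_ge0 w)) -/(vnorm n w).
  by rewrite expr2 invfM; ring.
by rewrite /gs_step -E.
Qed.

Lemma gs_wlist (vs : seq (nat -> R)) : gram_schmidt n vs = map normz (wlist vs).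
Proof.
elim/last_ind: vs => [|vs v IH] //.
rewrite /gram_schmidt /wlist !foldl_rcons.
rewrite /gram_schmidt /wlist in IH.
by rewrite IH map_rcons gs_step_normz.
Qed.

Variable v : nat -> nat -> R.

Definition Wseq N := wlist (map v (iota 0 N)).
Definition Wv j := wstep (Wseq j) (v j).

Lemma Wseq_eq N : Wseq N = map Wv (iota 0 N).
Proof.
elim: N => // N IH.
have E : iota 0 N.+1 = rcons (iota 0 N) N by rewrite -cats1 -addn1 iotaD.
rewrite /Wseq !E !map_rcons /wlist foldl_rcons -/(wlist _) -/(Wseq N) IH; rewrite -IH.
done.
Qed.

Lemma Wv_eq j i : Wv j i =
  v j i - \sum_(l <- iota 0 j) (vdot n (v j) (Wv l) / vdot n (Wv l) (Wv l)) * Wv l i.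
Proof. by rewrite /Wv /wstep Wseq_eq big_map. Qed.

Definition inspan j (x : nat -> R) :=
  exists b : nat -> R, forall i, (i < n)%N -> x i = \sum_(m < j) b m * v m i.

Lemma inspan_add j (x y : nat -> R) : inspan j x -> inspan j y -> inspan j (fun i => x i + y i).
Proof.
move=> [b Hb] [c Hc]; exists (fun m => b m + c m) => i ilt.
by rewrite Hb // Hc // -big_split; apply: eq_bigr => m _; rewrite mulrDl.
Qed.

Lemma inspan_scale j (c : R) (x : nat -> R) : inspan j x -> inspan j (fun i => c * x i).
Proof.
move=> [b Hb]; exists (fun m => c * b m) => i ilt.
by rewrite Hb // mulr_sumr; apply: eq_bigr => m _; rewrite mulrA.
Qed.

Lemma inspan_ext j (x y : nat -> R) : inspan j x -> (forall i, (i < n)%N -> x i = y i) -> inspan j y.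
Proof. by move=> [b Hb] xy; exists b => i ilt; rewrite -xy // Hb. Qed.

Lemma inspan_zero j : inspan j (fun _ => 0).
Proof. by exists (fun _ => 0) => i _; rewrite big1 // => m _; rewrite mul0r. Qed.

Lemma inspan_sum (I : eqType) j (s : seq I) (F : I -> nat -> R) :
  (forall l, l \in s -> inspan j (F l)) -> inspan j (fun i => \sum_(l <- s) F l i).
Proof.
elim: s => [|l s IH] H.
  by apply: (inspan_ext (inspan_zero j)) => i _; rewrite big_nil.
apply: (inspan_ext (x := fun i => F l i + \sum_(k <- s) F k i)).
  apply: inspan_add; first by apply: H; rewrite mem_head.
  by apply: IH => k ks; apply: H; rewrite in_cons ks orbT.
by move=> i _; rewrite big_cons.
Qed.

Lemma inspan_mono j j' (x : nat -> R) : (j <= j')%N -> inspan j x -> inspan j' x.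
Proof.
move=> jj [b Hb]; exists (fun m => if (m < j)%N then b m else 0) => i ilt.
rewrite Hb // (big_ord_widen j' (fun m => b m * v m i) jj) big_mkcond /=.
by apply: eq_bigr => m _; case: ifP => //; rewrite mul0r.
Qed.

Lemma inspan_v j m : (m < j)%N -> inspan j (v m).
Proof.
move=> mj; exists (fun k => if k == m then 1 else 0) => i ilt.
rewrite (bigD1 (Ordinal mj)) //= eqxx mul1r big1 ?addr0 // => k /eqP km.
case: eqP => [e|_]; last by rewrite mul0r.
by exfalso; apply: km; apply: val_inj.
Qed.

Lemma Wv_rep j : exists y : nat -> R, inspan j y /\ forall i, (i < n)%N -> Wv j i = v j i + y i.
Proof.
elim/ltn_ind: j => j IH.
exists (fun i => - \sum_(l <- iota 0 j)
   (vdot n (v j) (Wv l) / vdot n (Wv l) (Wv l)) * Wv l i).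
split; last by move=> i _; rewrite Wv_eq.
apply: (inspan_ext (x := fun i => (-1) * \sum_(l <- iota 0 j)
   (vdot n (v j) (Wv l) / vdot n (Wv l) (Wv l)) * Wv l i)); last first.
  by move=> i _; rewrite mulN1r.
apply: inspan_scale; apply: inspan_sum => l; rewrite mem_iota add0n => /andP [_ lj].
apply: inspan_scale; apply: (inspan_mono lj).
have [y [Hy Ey]] := IH l lj.
apply: (inspan_ext (x := fun i => v l i + y i)); last by move=> i ilt; rewrite Ey.
by apply: inspan_add; [apply: inspan_v|apply: (inspan_mono (leqnSn l))].
Qed.

Lemma Wv_nz : \det (\matrix_(i < n, j < n) v j i) != 0 ->
  forall j, (j < n)%N -> vdot n (Wv j) (Wv j) != 0.
Proof.
move=> dA j jn; apply/negP => /eqP H0.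
have W0 : forall i, (i < n)%N -> Wv j i = 0.
  move=> i ilt.
  have := psumr_eq0P (P := predT) (F := fun k : 'I_n => Wv j k * Wv j k).
  move=> /(_ (fun k _ => ltac:(by rewrite -expr2 sqr_ge0)) H0 (Ordinal ilt) isT) /=.
  by move/eqP; rewrite mulf_eq0 orbb => /eqP.
have [y [[b Hb] Ey]] := Wv_rep j.
set r : 'rV[R]_n := \row_(m < n) (if (m < j)%N then b m else if m == j :> nat then 1 else 0).
have r0 : r != 0.
  apply/eqP => r0; have := congr1 (fun M : 'rV[R]_n => M 0 (Ordinal jn)) r0.
  by rewrite !mxE /= ltnn eqxx => /eqP; rewrite oner_eq0.
move/negP: dA; apply; rewrite -det_tr; apply/det0P; exists r => //.
apply/rowP => i; rewrite !mxE.
have -> : \sum_(m < n) r 0 m * (\matrix_(i0 < n, j0 < n) v j0 i0)^T m i =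
    \sum_(0 <= m < n) (if (m < j)%N then b m else if m == j then 1 else 0) * v m i.
  by rewrite big_mkord; apply: eq_bigr => m _; rewrite !mxE.
rewrite (big_cat_nat (n := j)) //=; last exact: ltnW.
rewrite (big_ltn jn) ltnn eqxx mul1r.
rewrite [X in _ + (_ + X)]big1_seq ?addr0; last first.
  move=> m /andP [_]; rewrite mem_index_iota => /andP [jm _].
  by rewrite ltnNge ltnW //= gtn_eqF // mul0r.
have -> : \sum_(0 <= m < j) (if (m < j)%N then b m else if m == j then 1 else 0) * v m i
    = \sum_(m < j) b m * v m i.
  rewrite big_mkord; apply: eq_bigr => m _; by rewrite ltn_ord.
by rewrite -Hb // addrC -Ey // W0.
Qed.

End GS.
Section Bounds.
Variable R : realType.

Lemma bound_cont (h : R -> R) (a b : R) : a <= b ->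
  (forall x, a <= x <= b -> derivable h x 1) ->
  exists M : R, 0 <= M /\ forall x, a <= x <= b -> `|h x| <= M.
Proof.
move=> ab dh.
have dh' : {in `[a, b]%R, forall x, derivable h x 1}.
  by move=> x; rewrite in_itv /= => /dh.
have dhN : {in `[a, b]%R, forall x, derivable (fun y => - h y) x 1}.
  by move=> x /dh' dx; apply: derivableN.
have [c1 c1ab H1] := EVT_max ab (derivable_within_continuous dh').
have [c2 c2ab H2] := EVT_max ab (derivable_within_continuous dhN).
exists (Num.max `|h c1| `|h c2|); split; first by rewrite le_max normr_ge0.
move=> x xab; have xi : x \in `[a, b]%R by rewrite in_itv /=.
have := H1 x xi; have := H2 x xi => h2 h1.
rewrite le_max; case: (lerP 0 (h x)) => hx.
  by apply/orP; left; rewrite ger0_norm //; apply: (le_trans h1); rewrite ler_norm.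
apply/orP; right; rewrite ltr0_norm //; apply: (le_trans h2).
by rewrite -normrN ler_norm.
Qed.

Lemma lip_cont (h : R -> R) (a b : R) : a <= b ->
  (forall x, a <= x <= b -> derivable h x 1) ->
  (forall x, a <= x <= b -> derivable (derive1 h) x 1) ->
  exists M : R, 0 <= M /\ forall x y, a <= x <= b -> a <= y <= b ->
     `|h x - h y| <= M * `|x - y|.
Proof.
move=> ab dh ddh.
have [M [M0 HM]] := bound_cont ab ddh.
exists M; split => // x y xab yab.
wlog xy : x y xab yab / x <= y.
  move=> W; case/orP: (le_total x y) => xy; first exact: (W x y xab yab xy).
  rewrite -normrN opprB [`|x - y|]distrC; exact: (W y x yab xab xy).
have dxy : forall z, z \in `]x, y[%R -> is_derive z 1 h (derive1 h z).
  move=> z; rewrite in_itv /= => /andP [xz zy].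
  rewrite derive1E; apply: derivableP; apply: dh.
  case/andP: xab => ax _; case/andP: yab => _ yb.
  by rewrite (le_trans ax (ltW xz)) (le_trans (ltW zy) yb).
have cxy : {within [set` `[x, y]%R], continuous h}.
  apply: derivable_within_continuous => z; rewrite in_itv /= => /andP [xz zy].
  apply: dh; case/andP: xab => ax _; case/andP: yab => _ yb.
  by rewrite (le_trans ax xz) (le_trans zy yb).
have [c cxy' E] := MVT_segment xy dxy cxy.
rewrite -normrN opprB E normrM [`|x - y|]distrC ler_wpM2r //.
apply: HM; move: cxy'; rewrite in_itv /= => /andP [xc cy].
case/andP: xab => ax _; case/andP: yab => _ yb.
by rewrite (le_trans ax xc) (le_trans cy yb).
Qed.

Lemma fin_bound (N : nat) (P : nat -> R -> Prop) :
  (forall k M M', P k M -> M <= M' -> P k M') ->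
  (forall k, (k < N)%N -> exists M, P k M) ->
  exists M : R, 0 <= M /\ forall k, (k < N)%N -> P k M.
Proof.
move=> mono; elim: N => [|N IH] H; first by exists 0; split.
have [M [M0 HM]] := IH (fun k kN => H k (ltnW kN)).
have [M1 HM1] := H N (ltnSn N).
exists (Num.max M M1); split; first by rewrite le_max M0.
move=> k; rewrite ltnS leq_eqVlt => /orP [/eqP -> |kN].
  by apply: (mono _ _ _ HM1); rewrite le_max lexx orbT.
by apply: (mono _ _ _ (HM k kN)); rewrite le_max lexx.
Qed.

End Bounds.
Section Main.
Variables (R : realType) (n : nat) (f : nat -> R -> R) (U : set R).
Hypotheses (n3 : (3 <= n)%N) (hU : open U)
  (hsub : `[(-2 : R), 2]%classic `<=` U)
  (hf : forall i k x, (i < n.-1)%N -> U x -> derivable (derive1n k (f i)) x 1)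
  (hdet : forall t, U t -> \det (wronski_mx n f t) != 0)
  (hlast : forall t, U t -> e_last n f t n.-1 != 0).

Definition vt t j := gamma_der f j.+1 t.

Lemma inU x : -2 <= x <= 2 -> U x.
Proof. by move=> H; apply: hsub; rewrite /= in_itv /=. Qed.

Lemma Sinf_v j i : (i < n)%N -> Sinf U (fun t => vt t j i).
Proof.
move=> ilt; rewrite /vt /gamma_der.
apply: (@Sinf_derive1n R U (gamma f i) j.+1).
rewrite /gamma; case: eqP => [_|i0]; first exact: Sinf_id.
move=> k x Ux; apply: hf => //.
lia.
Qed.

Lemma Sinf_vdot (a b : R -> nat -> R) :
  (forall k, (k < n)%N -> Sinf U (fun t => a t k)) ->
  (forall k, (k < n)%N -> Sinf U (fun t => b t k)) ->
  Sinf U (fun t => vdot n (a t) (b t)).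
Proof.
move=> ha hb; rewrite /vdot; apply: Sinf_sum => // k _.
by apply: Sinf_mul => //; [apply: ha|apply: hb].
Qed.

Lemma Sinf_Wv j : (j < n)%N -> forall i, (i < n)%N -> Sinf U (fun t => Wv n (vt t) j i).
Proof.
elim/ltn_ind: j => j IH jn i ilt.
apply: (Sinf_ext hU (a := fun t => vt t j i - \sum_(l <- iota 0 j)
   (vdot n (vt t j) (Wv n (vt t) l) / vdot n (Wv n (vt t) l) (Wv n (vt t) l))
     * Wv n (vt t) l i)); last by move=> t _; rewrite Wv_eq.
apply: Sinf_sub => //; first exact: Sinf_v.
apply: Sinf_sum => // l; rewrite mem_iota add0n => /andP [_ lj].
have ln : (l < n)%N by apply: ltn_trans jn.
apply: Sinf_mul => //; last exact: (IH l lj ln i ilt).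
apply: Sinf_mul => //.
  by apply: Sinf_vdot => [k kn|k kn]; [apply: Sinf_v | apply: (IH l lj ln k kn)].
apply: Sinf_inv => //; first by apply: Sinf_vdot => k kn; apply: (IH l lj ln k kn).
by move=> t Ut; apply: Wv_nz => //; apply: hdet.
Qed.

Lemma e_last_eq t : e_last n f t = normz n (Wv n (vt t) n.-1).
Proof.
rewrite /e_last /frenet.
have -> : [seq gamma_der f j.+1 t | j <- iota 0 n] = map (vt t) (iota 0 n) by [].
rewrite gs_wlist -/(Wseq n (vt t) n) Wseq_eq -map_comp.
have nn : (n.-1 < n)%N by rewrite prednK //; lia.
rewrite (nth_map 0%N); last by rewrite size_iota.
by rewrite nth_iota.
Qed.

Lemma Gvec_eq t i : U t ->
  Wv n (vt t) n.-1 n.-1 != 0 /\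
  Gvec n f t i = Wv n (vt t) n.-1 i / Wv n (vt t) n.-1 n.-1.
Proof.
move=> Ut; have := hlast Ut; rewrite /Gvec e_last_eq /normz => H.
have [W0 N0] : Wv n (vt t) n.-1 n.-1 != 0 /\ vnorm n (Wv n (vt t) n.-1) != 0.
  by move: H; rewrite mulf_eq0 negb_or invr_eq0 => /andP.
split => //; field; by rewrite W0 N0.
Qed.

Lemma Sinf_G i : (i < n)%N -> Sinf U (fun t => Gvec n f t i).
Proof.
move=> ilt; have nn : (n.-1 < n)%N by rewrite prednK //; lia.
apply: (Sinf_ext hU (a := fun t => Wv n (vt t) n.-1 i * (Wv n (vt t) n.-1 n.-1)^-1)).
  apply: Sinf_mul => //; first exact: Sinf_Wv.
  apply: Sinf_inv => //; first exact: Sinf_Wv.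
  by move=> t Ut; case: (Gvec_eq i Ut).
by move=> t Ut; case: (Gvec_eq i Ut) => _ ->.
Qed.

Lemma G_bounds : exists M : R, 0 <= M /\ forall r, (r < n.-1)%N -> forall i, (i < n)%N ->
  forall t t', -2 <= t <= 2 -> -2 <= t' <= 2 ->
  `|Gder n f r t i| <= M /\ `|Gder n f r t i - Gder n f r t' i| <= M * `|t - t'|.
Proof.
have mono : forall (k : nat) (M M' : R), (forall i, (i < n)%N -> forall t t', -2 <= t <= 2 -> -2 <= t' <= 2 ->
  `|Gder n f k t i| <= M /\ `|Gder n f k t i - Gder n f k t' i| <= M * `|t - t'|) -> M <= M' ->
  (forall i, (i < n)%N -> forall t t', -2 <= t <= 2 -> -2 <= t' <= 2 ->
  `|Gder n f k t i| <= M' /\ `|Gder n f k t i - Gder n f k t' i| <= M' * `|t - t'|).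
  move=> k M M' H MM' i ilt t t' ht ht'; have [H1 H2] := H i ilt t t' ht ht'.
  split; first exact: le_trans H1 MM'.
  by apply: (le_trans H2); rewrite ler_wpM2r.
apply: (fin_bound mono) => r rlt.
have mono2 : forall (i : nat) (M M' : R), ((i < n)%N -> forall t t', -2 <= t <= 2 -> -2 <= t' <= 2 ->
  `|Gder n f r t i| <= M /\ `|Gder n f r t i - Gder n f r t' i| <= M * `|t - t'|) -> M <= M' ->
  ((i < n)%N -> forall t t', -2 <= t <= 2 -> -2 <= t' <= 2 ->
  `|Gder n f r t i| <= M' /\ `|Gder n f r t i - Gder n f r t' i| <= M' * `|t - t'|).
  move=> k M M' H MM' ilt t t' ht ht'; have [H1 H2] := H ilt t t' ht ht'.
  split; first exact: le_trans H1 MM'.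
  by apply: (le_trans H2); rewrite ler_wpM2r.
case: (fin_bound mono2 (N := n)) => [i ilt|M [_ HM]]; last first.
  by exists M => i ilt; apply: HM.
have S := Sinf_G ilt.
have m22 : (-2 : R) <= 2 by lra.
have [M1 [M10 H1]] := bound_cont m22 (h := derive1n r (fun s => Gvec n f s i))
   (fun x hx => S r x (inU hx)).
have [M2 [M20 H2]] := lip_cont m22 (h := derive1n r (fun s => Gvec n f s i))
   (fun x hx => S r x (inU hx))
   (fun x hx => ltac:(rewrite -derive1nS; exact: S r.+1 x (inU hx))).
exists (Num.max M1 M2) => _ t t' ht ht'; split.
  by apply: (le_trans (H1 t ht)); rewrite le_max lexx.
apply: (le_trans (H2 t t' ht ht')); rewrite ler_wpM2r //.
by rewrite le_max lexx orbT.
Qed.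

End Main.
Section Lists.

Definition prodlist (rs : seq (seq int)) : seq (seq int) :=
  foldr (fun r acc => [seq x :: y | x <- r, y <- acc]) [:: [::]] rs.

Lemma size_prodlist rs : size (prodlist rs) = (\prod_(r <- rs) size r)%N.
Proof. by elim: rs => [|r rs IH]; rewrite ?big_nil ?big_cons //= size_allpairs IH. Qed.

Lemma mem_prodlist_cons x xs r rs : x \in r -> xs \in prodlist rs ->
  x :: xs \in prodlist (r :: rs).
Proof. by move=> xr xsr; rewrite /=; apply: (allpairs_f (fun a b => a :: b)). Qed.

Lemma mem_prodlist_map (l : seq nat) (g : nat -> int) (h : nat -> seq int) :
  (forall k, k \in l -> g k \in h k) -> map g l \in prodlist (map h l).
Proof.
elim: l => [|k l IH] H /=; first by rewrite mem_seq1.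
apply: (allpairs_f (fun a b => a :: b)); first by apply: H; rewrite mem_head.
by apply: IH => j jl; apply: H; rewrite in_cons jl orbT.
Qed.

Definition irange (a b : int) : seq int := [seq a + (k%:Z) | k <- iota 0 (absz (b - a + 1))].

Lemma size_irange a b : size (irange a b) = absz (b - a + 1).
Proof. by rewrite size_map size_iota. Qed.

Lemma mem_irange a b x : a <= x -> x <= b -> x \in irange a b.
Proof.
move=> ax xb; apply/mapP; exists (absz (x - a)).
  rewrite mem_iota add0n /=.
  lia.
lia.
Qed.

End Lists.
Section Count.
Variables (R : realType) (n : nat) (f : nat -> R -> R) (M sigma : R).
Hypotheses (n3 : (3 <= n)%N) (M0 : 0 <= M) (s1 : 1 <= sigma)
 (hG : forall r, (r < n.-1)%N -> forall i, (i < n)%N -> forall t t', -2 <= t <= 2 -> -2 <= t' <= 2 ->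
   `|Gder n f r t i| <= M /\ `|Gder n f r t i - Gder n f r t' i| <= M * `|t - t'|).

Definition Dc : R := sigma + (n.-1)%:R * (3 * M).
Definition Bc : int := Num.floor Dc + 1.
Definition diffList := prodlist (map (fun _ : nat => irange (- Bc) Bc) (iota 0 n)).
Definition Cc : R := 5 * 4 ^+ n.-1 * (size diffList)%:R.

Lemma coord_le_vnorm (x : nat -> R) i : (i < n)%N -> `|x i| <= vnorm n x.
Proof.
move=> ilt; rewrite /vnorm -sqrtr_sqr ler_wsqrtr //.
rewrite /vdot (bigD1 (Ordinal ilt)) //= expr2 lerDl.
by apply: sumr_ge0 => k _; rewrite -expr2 sqr_ge0.
Qed.

Lemma term_bound (a c g g' d T Rr : R) : 0 <= a - c <= 1 -> `|c| <= T + 1 ->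
  T + 1 <= 2 * Rr -> 0 <= d -> Rr * d <= 1 -> `|g| <= M -> `|g - g'| <= M * d ->
  `|a * g - c * g'| <= 3 * M.
Proof.
move=> /andP[ac0 ac1] hc hT d0 hd hg hgg.
have -> : a * g - c * g' = (a - c) * g + c * (g - g') by ring.
apply: (le_trans (ler_normD _ _)); rewrite !normrM.
have h1 : `|a - c| * `|g| <= M.
  by rewrite -[M]mul1r; apply: ler_pM => //; rewrite ger0_norm.
have h2 : `|c| * `|g - g'| <= 2 * M.
  apply: (le_trans (ler_pM _ _ hc hgg)) => //.
  have Md : 0 <= M * d by apply: mulr_ge0.
  apply: (le_trans (ler_wpM2r Md hT)).
  have -> : 2 * Rr * (M * d) = 2 * M * (Rr * d) by ring.
  rewrite -[X in _ <= X]mulr1; apply: ler_wpM2l; [by apply: mulr_ge0 | exact: hd].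
lra.
Qed.

Lemma count_main (Rr : R) (T : nat -> R) :
  (forall r, (r < n.-1)%N -> sigma <= T r /\ T r <= Rr) ->
  forall s : seq (n.-tuple int), uniq s -> (forall z, z \in s -> in_L f T sigma z) ->
  (size s)%:R <= Cc * Rr * \prod_(r < n.-1) T r.
Proof.
move=> hT s us hs.
have n1 : (0 < n.-1)%N by lia.
have R1 : 1 <= Rr by have [h1 h2] := hT 0%N n1; apply: (le_trans s1 (le_trans h1 h2)).
have Rr0 : 0 < Rr by lra.
pose P z (w : R * (nat -> R) * (nat -> R)) := z \in s ->
  [/\ -2 <= w.1.1 <= 2, (forall r, (r < n.-1)%N -> `|w.1.2 r| <= T r),
      (forall i, (i < n)%N -> w.2 i = \sum_(r < n.-1) w.1.2 r * Gder n f r w.1.1 i) &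
      vnorm n (fun i => int_pt R z i - w.2 i) < sigma].
have : forall z, exists w, P z w.
  move=> z; case: (boolP (z \in s)) => zs; last by exists (0, fun _ => 0, fun _ => 0) => zs'; rewrite zs' in zs.
  have [y [[t [sv [ht [hsv hy]]]] hz]] := hs z zs.
  by exists (t, sv, y) => _; split.
move/choice => [w Hw].
pose tz z := (w z).1.1.
pose svz z := (w z).1.2.
pose code z : seq int := Num.floor (Rr * (tz z + 2)) :: [seq Num.floor (svz z r) | r <- iota 0 n.-1].
pose cen (c : seq int) i : R := \sum_(r < n.-1) (nth 0 c r.+1)%:~R * Gder n f r ((nth 0 c 0)%:~R / Rr - 2) i.
pose dz (z : n.-tuple int) := [seq (nth 0 (tval z) i - Num.floor (cen (code z) i)) | i <- iota 0 n].
pose phi z := (code z, dz z).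
pose codesList := prodlist (irange 0 (Num.floor (4 * Rr)) ::
   [seq irange (Num.floor (- T r)) (Num.floor (T r)) | r <- iota 0 n.-1]).
have phi_inj : injective phi.
  move=> z1 z2 E; have ec : code z1 = code z2 := congr1 fst E.
  have ed : dz z1 = dz z2 := congr1 snd E.
  apply: val_inj; apply: (@eq_from_nth _ 0); rewrite !size_tuple // => i ilt.
  have := congr1 (fun l => nth 0 l i) ed.
  by rewrite /= !(nth_map 0%N) ?size_iota // nth_iota // add0n ec => /addIr.
have HD : forall z, z \in s -> forall i, (i < n)%N -> `|(nth 0 (tval z) i)%:~R - cen (code z) i| <= Dc.
  move=> z zs i ilt; have [ht hsv hy hn] := Hw z zs.
  move: ht hsv hy hn; rewrite /cen /code /tz /svz /=.
  move: (w z) => [[t sv] y] /= ht hsv hy hn.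
  set c0 : R := (Num.floor (Rr * (t + 2)))%:~R.
  set t' : R := c0 / Rr - 2.
  have c0i := floor_itv (Rr * (t + 2)); rewrite -/c0 rmorphD /= -/c0 in c0i.
  have c00 : 0 <= c0.
    rewrite /c0 ler0z floor_ge0; apply: mulr_ge0; lra.
  have E : Rr * (t - t') = Rr * (t + 2) - c0.
    by rewrite /t'; field; rewrite gt_eqF.
  have dt0 : 0 <= t - t'.
    by rewrite -(pmulr_rge0 _ Rr0) E; lra.
  have dt1 : Rr * `|t - t'| <= 1 by rewrite ger0_norm // E; lra.
  have t'i : -2 <= t' <= 2.
    apply/andP; split; last by lra.
    have q0 : 0 <= c0 / Rr by apply: divr_ge0 => //; lra.
    by rewrite /t'; move: q0; set q := c0 / Rr; lra.
  have Ecen : \sum_(r < n.-1) (nth 0 [seq Num.floor (sv r0) | r0 <- iota 0 n.-1] r)%:~R *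
      Gder n f r ((Num.floor (Rr * (t + 2)))%:~R / Rr - 2) i =
      \sum_(r < n.-1) (Num.floor (sv r))%:~R * Gder n f r t' i.
    by apply: eq_bigr => r _; rewrite (nth_map 0%N) ?size_iota // nth_iota.
  rewrite Ecen.
  have h1 : `|(nth 0 (tval z) i)%:~R - y i| < sigma.
    exact: (le_lt_trans (coord_le_vnorm (fun i => int_pt R z i - y i) ilt) hn).
  have h2 : `|y i - \sum_(r < n.-1) (Num.floor (sv r))%:~R * Gder n f r t' i| <= (n.-1)%:R * (3 * M).
    rewrite hy // -sumrB; apply: (le_trans (ler_norm_sum _ _ _)).
    have <- : \sum_(r < n.-1) (3 * M) = (n.-1)%:R * (3 * M).
      by rewrite big_const_ord iter_addr addr0 (mulr_natl (3 * M) n.-1).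
    apply: ler_sum => r _.
    have [hT1 hT2] := hT r (ltn_ord r).
    have := hsv r (ltn_ord r); rewrite ler_norml => /andP [a1 a2].
    have := floor_itv (sv r); rewrite rmorphD /= => /andP [f1 f2].
    have [g1 g2] := hG (ltn_ord r) ilt ht t'i.
    apply: (term_bound (T := T r) (Rr := Rr) (d := `|t - t'|)) => //.
    - apply/andP; split; lra.
    - rewrite ler_norml; apply/andP; split; lra.
    - lra.
  have := ler_normD ((nth 0 (tval z) i)%:~R - y i)
     (y i - \sum_(r < n.-1) (Num.floor (sv r))%:~R * Gder n f r t' i).
  rewrite addrA subrK => h3.
  apply: (le_trans h3); rewrite /Dc; lra.
have Hcode : forall z, z \in s -> code z \in codesList.
  move=> z zs; have [ht hsv hy hn] := Hw z zs.
  apply: mem_prodlist_cons.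
    apply: mem_irange; first by rewrite floor_ge0; apply: mulr_ge0; [lra | rewrite /tz; lra].
    apply: le_floor; rewrite [4 * Rr]mulrC; apply: ler_wpM2l; [lra | rewrite /tz; lra].
  apply: mem_prodlist_map => r; rewrite mem_iota add0n => /andP[_ rlt].
  have := hsv r rlt; rewrite ler_norml => /andP [h1 h2].
  by apply: mem_irange; apply: le_floor.
have Hdz : forall z, z \in s -> dz z \in diffList.
  move=> z zs; apply: mem_prodlist_map => i; rewrite mem_iota add0n => /andP[_ ilt].
  have := HD z zs i ilt; rewrite ler_norml => /andP [h1 h2].
  have := floor_itv (cen (code z) i); have := floor_itv Dc.
  rewrite !rmorphD /= => /andP [d1 d2] /andP [c1 c2].
  apply: mem_irange.
    rewrite /Bc -(ler_int R) !rmorphB !rmorphN !rmorphD /=; lra.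
  rewrite /Bc -ltzD1 -(ltr_int R) !rmorphB !rmorphD /=; lra.
have H1 : (size s <= size codesList * size diffList)%N.
  rewrite -(size_map phi) -(size_allpairs pair); apply: uniq_leq_size.
    by rewrite map_inj_uniq.
  move=> p /mapP [z zs ->]; apply: (allpairs_f pair); [exact: Hcode | exact: Hdz].
have Hs : (size s)%:R <= (size codesList)%:R * (size diffList)%:R :> R.
  by rewrite -natrM ler_nat.
have Hc : (size codesList)%:R <= 5 * Rr * (4 ^+ n.-1 * \prod_(r < n.-1) T r).
  rewrite /codesList size_prodlist big_cons big_map natrM natr_prod.
  have Ha : (size (irange 0 (Num.floor (4 * Rr))))%:R <= 5 * Rr :> R.
    have f0 : 0 <= Num.floor (4 * Rr) by rewrite floor_ge0; lra.
    rewrite size_irange natr_absz ger0_norm; last by rewrite subr0 addr_ge0.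
    have := floor_le (4 * Rr); rewrite subr0 rmorphD /=; lra.
  have Hb : \prod_(j <- iota 0 n.-1) (size (irange (Num.floor (- T j)) (Num.floor (T j))))%:R
      <= \prod_(j <- iota 0 n.-1) (4 * T j) :> R.
    rewrite big_seq [X in _ <= X]big_seq; apply: ler_prod => j.
    rewrite mem_iota add0n => /andP [_ jlt].
    have [hT1 hT2] := hT j jlt.
    have T1 : 1 <= T j := le_trans s1 hT1.
    have fl : Num.floor (- T j) <= Num.floor (T j) by apply: le_floor; lra.
    have nn : 0 <= Num.floor (T j) - Num.floor (- T j) + 1 by rewrite addr_ge0 // subr_ge0.
    rewrite size_irange natr_absz ger0_norm //.
    apply/andP; split; first by rewrite ler0z.
    have := floor_le (T j); have := floor_itv (- T j).
    rewrite !rmorphD ?rmorphB ?rmorphN ?rmorph1 /= => /andP [_ h2] h1; lra.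
  have Hp : \prod_(j <- iota 0 n.-1) (4 * T j) = 4 ^+ n.-1 * \prod_(r < n.-1) T r.
    have -> : \prod_(j <- iota 0 n.-1) (4 * T j) = \prod_(r < n.-1) (4 * T r).
      by rewrite -(big_mkord xpredT (fun r => 4 * T r)) /index_iota subn0.
    by rewrite big_split /= prodr_const card_ord.
  rewrite -Hp; apply: ler_pM => //.
  by apply: prodr_ge0.
have K0 : 0 <= (size diffList)%:R :> R by [].
apply: (le_trans Hs); apply: (le_trans (ler_wpM2r K0 Hc)).
rewrite /Cc; have -> : 5 * Rr * (4 ^+ n.-1 * \prod_(r < n.-1) T r) * (size diffList)%:R =
  5 * 4 ^+ n.-1 * (size diffList)%:R * Rr * \prod_(r < n.-1) T r by ring.
exact: lexx.
Qed.

End Count.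

Unset Implicit Arguments.

Theorem corollary4p2 (R : realType) (n : nat) (f : nat -> R -> R) (U : set R) :
  (3 <= n)%N ->
  open U ->
  `[(-2 : R), 2]%classic `<=` U ->
  (* f = (f_0, ..., f_{n-2}) is smooth on U *)
  (forall i k x, (i < n.-1)%N -> U x -> derivable (derive1n k (f i)) x 1) ->
  (* det[gamma^(1)(t) ... gamma^(n)(t)] <> 0 on U *)
  (forall t, U t -> \det (wronski_mx n f t) != 0) ->
  (* standing assumption: e_{n,n}(t) <> 0 on U *)
  (forall t, U t -> e_last n f t n.-1 != 0) ->
  forall sigma : R, 1 <= sigma ->
  exists C : R,
    forall (Rr : R) (T : nat -> R),
      (forall r, (r < n.-1)%N -> sigma <= T r /\ T r <= Rr) ->
      forall s : seq (n.-tuple int),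
        uniq s -> (forall z, z \in s -> in_L f T sigma z) ->
        (size s)%:R <= C * Rr * \prod_(r < n.-1) T r.
Proof.
move=> n3 hU hsub hf hdet hlast sigma s1.
have [M [M0 HM]] := G_bounds n3 hU hsub hf hdet hlast.
exists (Cc n M sigma) => Rr T hT s us hs.
exact: (count_main n3 M0 s1 HM hT us hs).
Qed.
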